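(* Let $w\ge 2$, $h\ge 3$ and $G=P_w(U)\sqcap C_h$ with $U=\{i,j\}$ for distinct $i,j\in\{1,\dots,w\}$. Then $Z(G)\le h$.
   Context: All graphs are finite, simple and undirected. Zero forcing: given a graph $G$ and a set $S\subseteq V(G)$ of initially filled vertices, the color change rule says that if a filled vertex $v$ has exactly one unfilled neighbor $u$, then $v$ forces $u$ to become filled. $S$ is a zero forcing set if repeatedly applying this rule eventually fills every vertex of $G$. The zero forcing number $Z(G)$ is the minimum cardinality of a zero forcing set of $G$. The path $P_n$ has vertex set $\{1,\dots,n\}$ and edges $\{k,k+1\}$ for $1\le k\le n-1$; the cycle $C_n$ ($n\ge3$) has vertex set $\{1,\dots,n\}$ and edges $\{k,k+1\}$ for $1\le k\le n-1$ together with $\{n,1\}$. Generalized hierarchical product: for graphs $W,H$ and $U\subseteq V(W)$ (the root set), $W(U)\sqcap H$ is the graph with vertex set $V(W)\times V(H)$ in which $(x_1,y_1)$ and $(x_2,y_2)$ are adjacent iff either ($x_1=x_2\in U$ and $y_1y_2\in E(H)$) or ($y_1=y_2$ and $x_1x_2\in E(W)$). *)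

(* Defs.v *)
From mathcomp Require Import all_boot.
From mathcomp Require Import boolp.
Set Implicit Arguments. Unset Strict Implicit. Unset Printing Implicit Defensive.

(* A graph is given by an adjacency relation on a finite vertex type
   (for the graphs below it is symmetric and irreflexive). *)

Definition force_step (T : finType) (adj : rel T) (S S' : {set T}) : Prop :=
  exists v u, [/\ v \in S, adj v u, u \notin S,
    (forall x, adj v x -> x \notin S -> x = u) & S' = u |: S].

Inductive forces_to (T : finType) (adj : rel T) : {set T} -> {set T} -> Prop :=
| forces_refl S : forces_to adj S S
| forces_step S S' S'' : force_step adj S S' -> forces_to adj S' S'' -> forces_to adj S S''.

Definition zero_forcing_set (T : finType) (adj : rel T) (S : {set T}) : Prop :=
  forces_to adj S setT.

Lemma zero_forcing_setT (T : finType) (adj : rel T) : zero_forcing_set adj setT.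
Proof. exact: forces_refl. Qed.

Lemma exists_zfs_size (T : finType) (adj : rel T) :
  exists n, `[< exists S : {set T}, zero_forcing_set adj S /\ #|S| = n >].
Proof. by exists #|[set: T]|; apply/asboolP; exists setT; split=> //; exact: zero_forcing_setT. Qed.

Definition zero_forcing_number (T : finType) (adj : rel T) : nat :=
  ex_minn (exists_zfs_size adj).

(* Path P_w on 'I_w (vertex k+1 of the paper is k here): edges {k, k+1}. *)
Definition path_adj (w : nat) : rel 'I_w :=
  fun a b => (a.+1 == b :> nat) || (b.+1 == a :> nat).

Definition cycle_adj (h : nat) : rel 'I_h :=
  fun a b => (a.+1 %% h == b :> nat) || (b.+1 %% h == a :> nat).

Definition hprod_adj (V1 V2 : finType) (adjW : rel V1) (U : {set V1})
  (adjH : rel V2) : rel (V1 * V2) :=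
  fun p q => ((p.1 == q.1) && (p.1 \in U) && adjH p.2 q.2)
          || ((p.2 == q.2) && adjW p.1 q.1).

(* Main.v *)
Require Import Defs.
From mathcomp Require Import all_boot.
From mathcomp Require Import boolp.
Set Implicit Arguments. Unset Strict Implicit. Unset Printing Implicit Defensive.

Section S.
Variables (w h : nat) (U : {set 'I_w}).
Let adj := hprod_adj (@path_adj w) U (@cycle_adj h).

Definition FF (k m : nat) : {set 'I_w * 'I_h} :=
  [set p : 'I_w * 'I_h | (p.1 < k) || ((p.1 == k :> nat) && (p.2 < m))].

Lemma forces_trans A B C : forces_to adj A B -> forces_to adj B C -> forces_to adj A C.
Proof.
elim=> [//|X Y Z st _ IH] H; apply: forces_step st _; exact: IH.
Qed.

Lemma step1 k m (k0 : 0 < k) (kw : k < w) (mh : m < h) :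
  force_step adj (FF k m) (FF k m.+1).
Proof.
have kw' : k.-1 < w by apply: leq_ltn_trans kw; exact: leq_pred.
exists (Ordinal kw', Ordinal mh), (Ordinal kw, Ordinal mh); split.
- by rewrite inE /= ltn_predL k0.
- by rewrite /adj /hprod_adj /= eqxx /path_adj /= prednK // eqxx orbT.
- by rewrite inE /= ltnn eqxx ltnn.
- case=> a b; rewrite /adj /hprod_adj /path_adj inE /= => /orP[/andP[/andP[/eqP <- _] _]|].
    by rewrite /= ltn_predL k0.
  case/andP=> /eqP <- /orP[/eqP ak|/eqP ak].
    by move=> _; congr pair; apply: val_inj; rewrite /= -ak prednK.
  by move=> H; exfalso; move: H; rewrite ak leq_pred.
- apply/setP=> [[a b]]; rewrite !inE /= xpair_eqE -!val_eqE /= ltnS (leq_eqVlt b).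
  by case: (a < k); case: (a == k :> nat); case: (b == m :> nat); rewrite ?orbT.
Qed.

Lemma colm k (k0 : 0 < k) (kw : k < w) d m : m + d <= h -> forces_to adj (FF k m) (FF k (m + d)).
Proof.
elim: d m => [|d IH] m mh; first by rewrite addn0; exact: forces_refl.
have mh' : m < h by apply: leq_trans mh; rewrite -addSnnS leq_addr.
apply: forces_step (step1 k0 kw mh') _; rewrite addnS -addSn; apply: IH; by rewrite addSn -addnS.
Qed.

Lemma FFh k : FF k h = FF k.+1 0.
Proof.
apply/setP=> [[a b]]; rewrite !inE /= ltn0 andbF orbF (ltn_ord b) andbT.
by rewrite ltnS (leq_eqVlt a) orbC.
Qed.

Lemma cols d k (k0 : 0 < k) : k + d = w -> forces_to adj (FF k 0) setT.
Proof.
elim: d k k0 => [|d IH] k k0 kw.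
  rewrite (_ : FF k 0 = setT); first exact: forces_refl.
  apply/setP=> [[a b]]; rewrite !inE /=; have : a < k + 0 by rewrite kw ltn_ord.
  by rewrite addn0 => ->.
have kw' : k < w by rewrite -kw addnS ltnS leq_addr.
apply: forces_trans (colm k0 kw' (m:=0) (d:=h) _) _ => //.
by rewrite add0n FFh; apply: IH => //; rewrite addSnnS.
Qed.

End S.

Theorem mainTheorem9 (w h : nat) (i j : 'I_w) :
  2 <= w -> 3 <= h -> i != j ->
  zero_forcing_number (hprod_adj (@path_adj w) [set i; j] (@cycle_adj h)) <= h.
Proof.
move=> w2 _ _.
rewrite /zero_forcing_number; case: ex_minnP => n _ Hmin; apply: Hmin.
apply/asboolP; exists (FF w h 1 0); split.
  apply: (@cols w h _ (w - 1)) => //; by rewrite subnKC // ltnW.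
have w0 : 0 < w by apply: leq_trans w2.
pose x0 : 'I_w := Ordinal w0.
rewrite (_ : FF w h 1 0 = [set (x0, y) | y : 'I_h]).
  by rewrite card_imset ?card_ord // => y1 y2 [].
apply/setP=> [[a b]]; rewrite !inE /= ltnS leqn0 ltn0 andbF orbF.
apply/idP/imsetP => [/eqP a0|[y _ [-> _]] //].
by exists b => //; congr pair; apply: val_inj.
Qed.
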